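(* Let $q\in\mathrm{prob}(\{0,1\}^2)$. The set $D:=\{(\pi_1,\chi^{(1)}_{1|1}):(\pi,\chi)\in\Theta_2,\ \mu(\pi,\chi)=q\}$ is nonempty and equals the set of all $(\mathrm{Pr},\mathrm{Se}_1)\in[0,1]^2$ satisfying $\mathrm{Pr}-q_{0+}\le\mathrm{Pr}\,\mathrm{Se}_1\le q_{1+}$.
   Context: A subscript $+$ denotes summation over the replaced index: $q_{0+}=q_{00}+q_{01}$, $q_{1+}=q_{10}+q_{11}$. $\mathrm{prob}(\mathcal{X})$ is the set of probability densities on a finite set $\mathcal{X}$; $\mathrm{markov}(\mathcal{X},\mathcal{Y})$ the set of maps $(x,y)\mapsto p_{y|x}$ with $p_{\cdot|x}\in\mathrm{prob}(\mathcal{Y})$. $\Theta_2:=\mathrm{prob}(\{0,1\})\times\mathrm{markov}(\{0,1\},\{0,1\}^2)$, $\mu(\pi,\chi)_j:=\sum_{i=0}^1\pi_i\chi_{j|i}$ for $j\in\{0,1\}^2$, $\chi^{(1)}_{\iota|i}:=\chi_{\iota0|i}+\chi_{\iota1|i}$. *)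

(* Defs.v *)
(* finite probability on {0,1} = 'I_2, {0,1}^2 = 'I_2 * 'I_2. *)
From HB Require Import structures.
From mathcomp Require Import all_boot all_order all_algebra.
Set Implicit Arguments. Unset Strict Implicit. Unset Printing Implicit Defensive.
Import Order.TTheory GRing.Theory Num.Theory.
Local Open Scope ring_scope.

Definition prob (R : realFieldType) (X : finType) (p : X -> R) : Prop :=
  (forall x, 0 <= p x) /\ \sum_(x : X) p x = 1.

Definition markov (R : realFieldType) (X Y : finType) (k : X -> Y -> R) : Prop :=
  forall x, prob (k x).

Definition b0 : 'I_2 := ord0.
Definition b1 : 'I_2 := ord_max.

Definition mu (R : realFieldType) (pi : 'I_2 -> R) (chi : 'I_2 -> 'I_2 * 'I_2 -> R)
  (j : 'I_2 * 'I_2) : R := \sum_(i : 'I_2) pi i * chi i j.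

Definition chi1 (R : realFieldType) (chi : 'I_2 -> 'I_2 * 'I_2 -> R) (iota i : 'I_2) : R :=
  chi i (iota, b0) + chi i (iota, b1).

Definition qplus (R : realFieldType) (q : 'I_2 * 'I_2 -> R) (iota : 'I_2) : R :=
  q (iota, b0) + q (iota, b1).

Definition inD (R : realFieldType) (q : 'I_2 * 'I_2 -> R) (Pr Se : R) : Prop :=
  exists (pi : 'I_2 -> R) (chi : 'I_2 -> 'I_2 * 'I_2 -> R),
    prob pi /\ markov chi /\ (forall j, mu pi chi j = q j) /\
    Pr = pi b1 /\ Se = chi1 chi b1 b1.

(* Main.v *)
Require Import Defs.
From mathcomp Require Import all_boot all_order all_algebra ring lra.
Import Order.TTheory GRing.Theory Num.Theory.
Local Open Scope ring_scope.
Lemma I2 (i : 'I_2) : i = b0 \/ i = b1.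
Proof. case: i => [[|[|n]] Hi]; [left|right|by []]; exact: val_inj. Qed.
Lemma sum2 (R : realFieldType) (f : 'I_2 -> R) : \sum_i f i = f b0 + f b1.
Proof. rewrite big_ord_recr big_ord_recr big_ord0 /= add0r. congr (f _ + f _); exact: val_inj. Qed.
Lemma sum4 (R : realFieldType) (f : 'I_2 * 'I_2 -> R) :
  \sum_j f j = f (b0,b0) + f (b0,b1) + f (b1,b0) + f (b1,b1).
Proof. rewrite (eq_bigr (fun p => f (p.1,p.2))); last by case. rewrite -(pair_bigA _ (fun i k => f (i,k))) /= sum2 !sum2 /=. by rewrite !addrA. Qed.
Lemma all4 (P : 'I_2 * 'I_2 -> Prop) : P (b0,b0) -> P (b0,b1) -> P (b1,b0) -> P (b1,b1) -> forall j, P j.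
Proof. move=> ? ? ? ? [i k]; case: (I2 i) => ->; case: (I2 k) => -> //. Qed.
Lemma fwd (R : realFieldType) (q : 'I_2 * 'I_2 -> R) Pr Se : inD q Pr Se ->
     ((0 <= Pr <= 1) && (0 <= Se <= 1) /\
      Pr - qplus q b0 <= Pr * Se /\ Pr * Se <= qplus q b1).
Proof.
move=> [pi [chi [[pi0 pi1] [mk [mq [-> ->]]]]]].
rewrite sum2 in pi1.
have [c0 s0] := mk b0; have [c1 s1] := mk b1.
rewrite sum4 in s0; rewrite sum4 in s1.
rewrite /qplus -!mq /mu !sum2 /chi1.
have := pi0 b0; have := pi0 b1.
have := c0 (b0,b0); have := c0 (b0,b1); have := c0 (b1,b0); have := c0 (b1,b1).
have := c1 (b0,b0); have := c1 (b0,b1); have := c1 (b1,b0); have := c1 (b1,b1).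
move: pi1 s0 s1.
set p0 := pi b0; set p1 := pi b1.
set a00 := chi b0 (b0,b0); set a01 := chi b0 (b0,b1); set a10 := chi b0 (b1,b0); set a11 := chi b0 (b1,b1).
set d00 := chi b1 (b0,b0); set d01 := chi b1 (b0,b1); set d10 := chi b1 (b1,b0); set d11 := chi b1 (b1,b1).
move=> *.
have h1 : 0 <= p0 * (a00 + a01) by apply: mulr_ge0; lra.
have h2 : 0 <= p0 * (a10 + a11) by apply: mulr_ge0; lra.
have e3 : d10 + d11 = 1 - (d00 + d01) by lra.
have h3 : p1 * (d10 + d11) = p1 - p1 * (d00 + d01) by rewrite e3 mulrBr mulr1.
split; first (apply/and3P; split; [apply/andP; split| |]; lra).
rewrite !mulrDr in h1 h2 h3 *. split; lra.
Qed.

Lemma mkD (R : realFieldType) (q : 'I_2 * 'I_2 -> R) Pr Se (p0 p1 : R) (c0 c1 : 'I_2 * 'I_2 -> R) :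
  0 <= p0 -> 0 <= p1 -> p0 + p1 = 1 ->
  (forall j, 0 <= c0 j) -> c0 (b0,b0) + c0 (b0,b1) + c0 (b1,b0) + c0 (b1,b1) = 1 ->
  (forall j, 0 <= c1 j) -> c1 (b0,b0) + c1 (b0,b1) + c1 (b1,b0) + c1 (b1,b1) = 1 ->
  (forall j, p0 * c0 j + p1 * c1 j = q j) -> Pr = p1 -> Se = c1 (b1,b0) + c1 (b1,b1) ->
  inD q Pr Se.
Proof.
move=> h0 h1 hs g0 s0 g1 s1 hm -> ->.
exists (fun i => if i == b1 then p1 else p0).
exists (fun i => if i == b1 then c1 else c0).
split; first by split; [case=> [[|[|]]] | rewrite sum2].
split; first by case=> [[|[|]]] //= _; split => //; rewrite sum4.
split; first by move=> j; rewrite /mu sum2.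
by [].
Qed.

Lemma split2 (R : realFieldType) (a x y : R) : 0 <= a -> a <= x + y -> 0 <= x -> 0 <= y ->
  exists r s : R, [/\ 0 <= r, r <= x, 0 <= s, s <= y & r + s = a].
Proof.
move=> *; case: (lerP a x) => h.
  by exists a, 0; split => //; lra.
by exists x, (a - x); split; lra.
Qed.

Lemma bwd (R : realFieldType) (q : 'I_2 * 'I_2 -> R) Pr Se : prob q ->
     ((0 <= Pr <= 1) && (0 <= Se <= 1) /\
      Pr - qplus q b0 <= Pr * Se /\ Pr * Se <= qplus q b1) -> inD q Pr Se.
Proof.
move=> [qp qs] [/andP [/andP [Pr0 Pr1] /andP [Se0 Se1]] [l1 l2]].
rewrite sum4 in qs; rewrite /qplus in l1 l2.
have := qp (b0,b0); have := qp (b0,b1); have := qp (b1,b0); have := qp (b1,b1).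
move: qs l1 l2.
set q00 := q (b0,b0); set q01 := q (b0,b1); set q10 := q (b1,b0); set q11 := q (b1,b1).
move=> qs l1 l2 g11 g10 g01 g00.
have PS0 : 0 <= Pr * Se by apply: mulr_ge0.
have [r10 [r11 [h1 h2 h3 h4 h5]]] : exists r s : R, [/\ 0 <= r, r <= q10, 0 <= s, s <= q11 & r + s = Pr * Se].
  by apply: split2 => //.
have [r00 [r01 [k1 k2 k3 k4 k5]]] : exists r s : R, [/\ 0 <= r, r <= q00, 0 <= s, s <= q01 & r + s = Pr - Pr * Se].
  have PS1 : 0 <= Pr * (1 - Se) by apply: mulr_ge0; lra.
  rewrite mulrBr mulr1 in PS1; by apply: split2; lra.
have [P0|P0] := eqVneq Pr 0.
  apply: (@mkD _ _ _ _ 1 0 q (fun j => if j == (b1,b0) then Se else if j == (b0,b0) then 1 - Se else 0)) => //.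
  - lra.
  - by move=> j; case: ifP => _; [|case: ifP => _]; lra.
  - rewrite /b0 /b1 /=; lra.
  - by move=> j; rewrite mul1r mul0r addr0.
  - by rewrite /b0 /b1 /=; lra.
have [P1|P1] := eqVneq Pr 1.
  apply: (@mkD _ _ _ _ 0 1 (fun j => if j == (b0,b0) then 1 else 0) q) => //.
  - lra.
  - by move=> j; case: ifP => _; lra.
  - rewrite /b0 /b1 /=; lra.
  - by move=> j; rewrite mul1r mul0r add0r.
  - rewrite -/q10 -/q11; rewrite P1 mul1r in h5 k5; lra.
have P1' : 1 - Pr != 0 by rewrite subr_eq0 eq_sym.
pose rf j := if j == (b0,b0) then r00 else if j == (b0,b1) then r01 else if j == (b1,b0) then r10 else r11.
have rq : forall j, 0 <= rf j /\ rf j <= q j.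
  by apply: all4; rewrite /rf /=; split.
apply: (@mkD _ _ _ _ (1 - Pr) Pr (fun j => (q j - rf j) / (1 - Pr)) (fun j => rf j / Pr)) => //.
- lra.
- lra.
- move=> j; have [? ?] := rq j; apply: divr_ge0; lra.
- rewrite -!mulrDl /rf /= -/q00 -/q01 -/q10 -/q11.
  have -> : q00 - r00 + (q01 - r01) + (q10 - r10) + (q11 - r11) = 1 - Pr by lra.
  exact: mulfV.
- move=> j; have [? ?] := rq j; apply: divr_ge0; lra.
- rewrite -!mulrDl /rf /=.
  have -> : r00 + r01 + r10 + r11 = Pr by lra.
  exact: mulfV.
- move=> j; rewrite [_ * (_ / _)]mulrC [Pr * _]mulrC !divfK //; lra.
- rewrite -mulrDl /rf /= h5 mulrC mulKf //.
Qed.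

Theorem lemma6 (R : realFieldType) (q : 'I_2 * 'I_2 -> R) :
  prob q ->
  (exists Pr Se : R, inD q Pr Se) /\
  (forall Pr Se : R,
     inD q Pr Se <->
     ((0 <= Pr <= 1) && (0 <= Se <= 1) /\
      Pr - qplus q b0 <= Pr * Se /\ Pr * Se <= qplus q b1)).
Proof.
move=> hq; split; last by move=> Pr Se; split; [exact: fwd | exact: bwd].
exists 0, 0; apply: bwd => //.
have [qp _] := hq.
have := qp (b0,b0); have := qp (b0,b1); have := qp (b1,b0); have := qp (b1,b1).
rewrite /qplus mul0r; move=> *.
split; first by rewrite lexx ler01.
split; lra.
Qed.
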